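(* Let $p\in(0,1)$. For $n\ge1$ let $D_n$ be the random subset of an $n\times n$ square of $\mathbb{Z}^2$ obtained by keeping each vertex independently with probability $p$. Then there exists a constant $\alpha_p>0$ such that $\mathbb{E}\left[\ell_{\mathrm{TS}}(D_n)\right]/n^2\to\alpha_p$ as $n\to\infty$.
   Context: For a finite set $V\subseteq\mathbb{Z}^2$, $\ell_{\mathrm{TS}}(V)$ is the length of a shortest path in the standard Cayley graph of $\mathbb{Z}^2$ (generators $e_1,e_2$) visiting every point of $V$, with starting and ending points not prescribed ($\ell_{\mathrm{TS}}(\emptyset)=0$). *)

(* Defs.v *)
From HB Require Import structures.
From mathcomp Require Import all_boot all_order all_algebra.
From mathcomp Require Import all_classical all_reals all_analysis.
Set Implicit Arguments. Unset Strict Implicit. Unset Printing Implicit Defensive.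
Import Order.TTheory GRing.Theory Num.Theory.
Local Open Scope classical_set_scope.
Local Open Scope ring_scope.

Definition Z2 := (int * int)%type.

Definition Z2adj (z w : Z2) : bool :=
  ((`|z.1 - w.1|%N + `|z.2 - w.2|%N)%N == 1%N).

Definition is_Z2path (s : seq Z2) : bool := sorted Z2adj s.
Definition Z2path_length (s : seq Z2) : nat := (size s).-1.

(* l_TS(V): length of a shortest path visiting every point of V
   (endpoints not prescribed).  For V empty this is 0 (empty/one-point path). *)
Definition lTS {R : realType} (V : set Z2) : R :=
  inf [set (Z2path_length s)%:R | s in [set s : seq Z2 |
         is_Z2path s /\ (forall v, V v -> v \in s)]].

Definition sq_emb (n : nat) (x : 'I_n * 'I_n) : Z2 := ((x.1 : nat)%:Z, (x.2 : nat)%:Z).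

Definition sq_set (n : nat) (A : {set 'I_n * 'I_n}) : set Z2 :=
  [set z | exists2 x, x \in A & z = sq_emb x].

(* Probability that the site-percolation random set D_n (each vertex kept
   independently with probability p) equals A. *)
Definition perc_prob {R : realType} (p : R) (n : nat) (A : {set 'I_n * 'I_n}) : R :=
  p ^+ #|A| * (1 - p) ^+ (n * n - #|A|)%N.

Definition E_lTS {R : realType} (p : R) (n : nat) : R :=
  \sum_(A : {set 'I_n * 'I_n}) perc_prob p A * lTS (sq_set A).

(* Main.v *)
Require Import Defs.
From HB Require Import structures.
From mathcomp Require Import all_boot all_order all_algebra.
From mathcomp Require Import all_classical all_reals all_analysis.
From mathcomp Require Import zify ring lra.
Import Order.TTheory GRing.Theory Num.Theory numFieldNormedType.Exports.
Local Open Scope classical_set_scope.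
Local Open Scope ring_scope.
Definition dist (a b : Z2) : nat := (`|a.1 - b.1|%N + `|a.2 - b.2|%N)%N.

Lemma step_ex (a b : Z2) (d : nat) : dist a b = d.+1 ->
  exists a', Z2adj a a' /\ dist a' b = d.
Proof.
case: a b => [x y] [u v]; rewrite /dist /Z2adj /= => H.
have [hxu|hxu] := ltrP x u.
  exists (x + 1, y) => /=; split; [apply/eqP|]; lia.
have [hxu'|hxu'] := ltrP u x.
  exists (x - 1, y) => /=; split; [apply/eqP|]; lia.
have [hyv|hyv] := ltrP y v.
  exists (x, y + 1) => /=; split; [apply/eqP|]; lia.
exists (x, y - 1) => /=; split; [apply/eqP|]; lia.
Qed.

Lemma conn_ex (a b : Z2) :
  exists s, [/\ path Z2adj a s, last a s = b & size s = dist a b].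
Proof.
move: {2}(dist a b) (erefl (dist a b)) => d; elim: d a => [|d IH] a Hd.
  exists [::]; split => //=.
  by move: Hd; case: a b => [x y] [u v]; rewrite /dist /= => H; congr pair; lia.
have [a' [ha' hd]] := step_ex _ _ _ Hd.
have [s [hs1 hs2 hs3]] := IH a' hd.
by exists (a' :: s); rewrite /= ha' hs1 hs2 hs3 hd.
Qed.

Lemma Z2adj_sym (a b : Z2) : Z2adj a b = Z2adj b a.
Proof. by rewrite /Z2adj; apply/idP/idP => /eqP H; apply/eqP; lia. Qed.

Lemma cat_conn (x : Z2) s y t : path Z2adj x s -> path Z2adj y t ->
  exists u, [/\ path Z2adj x u, last x u = last y t,
    (forall v, v \in x :: s -> v \in x :: u),
    (forall v, v \in y :: t -> v \in x :: u) &
    size u = (size s + dist (last x s) y + size t)%N].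
Proof.
move=> hs ht.
have [c [hc1 hc2 hc3]] := conn_ex (last x s) y.
exists (s ++ c ++ t); split.
- by rewrite cat_path hs /= cat_path hc1 hc2 ht.
- by rewrite last_cat last_cat hc2.
- by move=> v; rewrite !(in_cons, mem_cat) => /orP[->|->]; rewrite ?orbT.
- move=> v; rewrite in_cons => /orP[/eqP ->|hv].
    have : y \in last x s :: c by rewrite -hc2 mem_last.
    rewrite in_cons => /orP[/eqP ->|hy].
      by have := mem_last x s; rewrite !(in_cons, mem_cat) => /orP[->|->]; rewrite ?orbT.
    by rewrite !(in_cons, mem_cat) hy !orbT.
  by rewrite !(in_cons, mem_cat) hv !orbT.
- by rewrite !size_cat hc3 addnA.
Qed.

Lemma chain_ex (q : nat -> Z2 * seq Z2) (B N : nat) :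
  (forall j, path Z2adj (q j).1 (q j).2) ->
  (forall j, (j < N)%N -> (dist (last (q j).1 (q j).2) (q j.+1).1 <= B)%N) ->
  exists u, [/\ path Z2adj (q 0%N).1 u, last (q 0%N).1 u = last (q N).1 (q N).2,
   (forall j v, (j <= N)%N -> v \in (q j).1 :: (q j).2 -> v \in (q 0%N).1 :: u) &
   (size u <= \sum_(j < N.+1) size (q j).2 + N * B)%N].
Proof.
move=> hq hB; elim: N hB => [|N IH] hB.
  exists (q 0%N).2; split => //.
    by move=> j v; rewrite leqn0 => /eqP ->.
  by rewrite big_ord1 mul0n addn0.
have [u [hu1 hu2 hu3 hu4]] := IH (fun j hj => hB j (ltnW hj)).
have [w [hw1 hw2 hw3 hw4 hw5]] := cat_conn _ _ _ _ hu1 (hq N.+1).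
exists w; split => //.
  move=> j v; rewrite leq_eqVlt => /orP[/eqP ->|hj]; first exact: hw4.
  by move=> hv; apply: hw3; apply: hu3 hv.
rewrite hw5 big_ord_recr /= hu2 mulSn.
have := hB N (ltnSn N); move: hu4; set S := (\sum_(j < N.+1) _)%N; set d := dist _ _; move: (N * B)%N => NB; lia.
Qed.

Set Implicit Arguments. Unset Strict Implicit.

Definition Pth (V : set Z2) (s : seq Z2) : Prop :=
  is_Z2path s /\ (forall v, V v -> v \in s).

Lemma lTS_le (R : realType) V s : Pth V s -> lTS (R:=R) V <= (Z2path_length s)%:R.
Proof.
move=> hs; apply: ge_inf; last by exists s.
by exists 0 => y [s' _ <-]; exact: ler0n.
Qed.

Lemma lTS_min (R : realType) V : (exists s, Pth V s) ->
  exists s, [/\ Pth V s, lTS (R:=R) V = (Z2path_length s)%:R &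
    forall s', Pth V s' -> (Z2path_length s <= Z2path_length s')%N].
Proof.
move=> hex.
have hP : exists n, `[< exists s, Pth V s /\ Z2path_length s = n >].
  by case: hex => s hs; exists (Z2path_length s); apply/asboolP; exists s.
case: (ex_minnP hP) => n /asboolP [s [hs hn]] hmin.
exists s; split => //.
- apply/le_anti/andP; split; first exact: lTS_le.
  rewrite hn; apply: lb_le_inf; first by exists (Z2path_length s)%:R, s.
  by move=> y [s' hs' <-]; rewrite ler_nat; apply: hmin; apply/asboolP; exists s'.
- by move=> s' hs'; rewrite hn; apply: hmin; apply/asboolP; exists s'.
Qed.

Lemma Pth_sub V W s : V `<=` W -> Pth W s -> Pth V s.
Proof. by move=> hVW [h1 h2]; split => // v /hVW; apply: h2. Qed.

Lemma ex_path_seq (l : seq Z2) : exists s, Pth [set v | v \in l] s.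
Proof.
elim: l => [|a l [s [hs1 hs2]]]; first by exists [::].
case: s hs1 hs2 => [|y t] hs1 hs2.
  exists [:: a]; split => // v /=; rewrite in_cons => /orP[/eqP ->|/hs2] //.
  by rewrite mem_head.
have [u [hu1 _ hu3 hu4 _]] := cat_conn a [::] _ _ isT hs1.
exists (a :: u); split => // v /=; rewrite in_cons => /orP[/eqP ->|/hs2 hv].
  by rewrite mem_head.
exact: hu4.
Qed.

Lemma min_head V x t : (exists v, V v) -> Pth V (x :: t) ->
  (forall s', Pth V s' -> (Z2path_length (x::t) <= Z2path_length s')%N) -> V x.
Proof.
move=> [v hv] [hp hc] hmin; apply: contrapT => hx.
have hPt : Pth V t.
  split; first exact: (path_sorted (x := x)).
  move=> w hw; have := hc w hw; rewrite in_cons => /orP[/eqP hwx|//].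
  by subst; exfalso.
have := hmin t hPt; rewrite /Z2path_length /=.
clear hmin hp hc; case: t hPt => [|y t'] hPt /=; last by lia.
by case: hPt => _ /(_ v hv).
Qed.

Lemma min_last V x t : (exists v, V v) -> Pth V (x :: t) ->
  (forall s', Pth V s' -> (Z2path_length (x::t) <= Z2path_length s')%N) -> V (last x t).
Proof.
move=> hne [hp hc] hmin.
have hr : rev (x :: t) = last x t :: rev (belast x t) by rewrite lastI rev_rcons.
have hsym : (fun z w => Z2adj w z) = Z2adj.
  by apply/funext => a; apply/funext => b; rewrite Z2adj_sym.
have hPr : Pth V (rev (x :: t)).
  split; first by rewrite /is_Z2path rev_sorted hsym.
  by move=> v hv; rewrite mem_rev; apply: hc.
rewrite hr in hPr; apply: (min_head hne hPr) => s' hs'.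
by rewrite -hr /Z2path_length size_rev; apply: hmin.
Qed.


Definition shift (t z : Z2) : Z2 := (z.1 + t.1, z.2 + t.2).

Lemma shiftK t : cancel (shift t) (shift (- t.1, - t.2)).
Proof. by case=> x y; rewrite /shift /= !addrK. Qed.

Lemma Pth_shift t V s : Pth V s -> Pth (shift t @` V) (map (shift t) s).
Proof.
move=> [h1 h2]; split.
  rewrite /is_Z2path sorted_map; apply: sub_sorted h1 => a b.
  by rewrite /= /Z2adj /shift /= => /eqP H; apply/eqP; lia.
by move=> v [w hw <-]; apply: map_f; apply: h2.
Qed.

Lemma lTS_shift (R : realType) t V : lTS (R:=R) (shift t @` V) = lTS V.
Proof.
rewrite /lTS; congr inf; apply/seteqP; split => y [s hs <-].
  exists (map (shift (- t.1, - t.2)) s); last by rewrite /Z2path_length size_map.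
  apply: Pth_sub (Pth_shift _ hs) => w hw; exists (shift t w); first by exists w.
  exact: shiftK.
by exists (map (shift t) s); [exact: Pth_shift | rewrite /Z2path_length size_map].
Qed.

Lemma lTS_ge0 (R : realType) V : (exists s, Pth V s) -> 0 <= lTS (R:=R) V.
Proof. by move=> /(lTS_min R) [s [_ -> _]]; exact: ler0n. Qed.

Lemma lTS_mono (R : realType) V W : V `<=` W -> (exists s, Pth W s) ->
  lTS (R:=R) V <= lTS W.
Proof.
move=> hVW /(lTS_min R) [s [hs -> _]]; apply: lTS_le; exact: Pth_sub hs.
Qed.

Lemma sq_path n (A : {set 'I_n * 'I_n}) : exists s, Pth (sq_set A) s.
Proof.
have [s hs] := ex_path_seq (map (@sq_emb n) (enum A)).
exists s; apply: Pth_sub hs => v [x hx ->] /=; apply: map_f.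
by rewrite mem_enum.
Qed.

Definition probD (R : realType) (p : R) (T : finType) (D A : {set T}) : R :=
  p ^+ #|A| * (1 - p) ^+ (#|D| - #|A|)%N.

Lemma sum_split (R : realType) (T : finType) (F : {set T} -> R) (x : T) (D : {set T}) :
  x \notin D ->
  \sum_(A : {set T} | A \subset x |: D) F A = \sum_(A : {set T} | A \subset D) (F A + F (x |: A)).
Proof.
move=> hx; rewrite big_split /= (bigID (fun A : {set T} => x \in A)) /= addrC; congr (_ + _).
  apply: eq_bigl => A; apply/andP/idP => [[hA hxA]|hA].
    apply/fintype.subsetP => y hy; have := fintype.subsetP hA y hy; rewrite !inE => /orP[/eqP hyx|//].
    by subst; rewrite hy in hxA.
  split; last by apply: contra hx; apply: (fintype.subsetP hA).
  by apply: fintype.subset_trans hA (finset.subsetUr _ _).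
rewrite (reindex_onto (fun B => x |: B) (fun A => A :\ x)) /=.
  apply: eq_bigl => B; rewrite setU11 andbT.
  apply/andP/idP => [[hB /eqP hBx]|hB].
    rewrite -hBx; apply/fintype.subsetP => y; rewrite !inE => /andP[hyx hy].
    by have := fintype.subsetP hB y; rewrite !inE hy (negbTE hyx) /=; apply.
  have hxB : x \notin B by apply: contra hx; apply: (fintype.subsetP hB).
  split; first by apply: finset.setUS.
  apply/eqP/setP => y; rewrite !inE; case: eqP => [->|//]; by rewrite (negbTE hxB).
by move=> A /andP[_ hxA]; rewrite finset.setD1K.
Qed.

Lemma marg (R : realType) (p : R) (T : finType) (D S : {set T}) (G : {set T} -> R) :
  S \subset D -> (forall A, G A = G (A :&: S)) ->
  \sum_(A : {set T} | A \subset D) probD p D A * G A = \sum_(B : {set T} | B \subset S) probD p S B * G B.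
Proof.
move=> hSD hG; move: {2}#|D :\: S| (erefl #|D :\: S|) => k.
elim: k D hSD => [|k IH] D hSD hk.
  have -> : D = S; last by [].
  apply/eqP; rewrite finset.eqEsubset hSD andbT; apply/fintype.subsetP => x hx.
  apply: contraT => hxS.
  by move: hk; move/eqP; rewrite cards_eq0 => /eqP/setP/(_ x); rewrite !inE hxS hx.
have [x hx] : exists x, x \in D :\: S.
  by apply/set0Pn; rewrite -card_gt0 hk.
move: (hx); rewrite inE => /andP[hxS hxD].
have hD : D = x |: (D :\ x) by rewrite finset.setD1K.
have hxD' : x \notin D :\ x by rewrite !inE eqxx.
have hSD' : S \subset D :\ x.
  apply/fintype.subsetP => y hy; rewrite !inE (fintype.subsetP hSD y hy) andbT.
  by apply: contra hxS => /eqP <-.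
rewrite -(IH (D :\ x) hSD'); last first.
  have : #|D :\: S| = #|(D :\ x) :\: S|.+1.
    rewrite (cardsD1 x (D :\: S)) hx add1n; congr (_.+1); apply: eq_card => y.
    by rewrite !inE; case: (y == x); case: (y \in S); case: (y \in D).
  by rewrite hk => -[].
rewrite hD sum_split // -hD; apply: eq_bigr => A hA.
have hxA : x \notin A by apply: contra hxD' => /(fintype.subsetP hA).
have hGA : G (x |: A) = G A.
  rewrite hG [in RHS]hG; congr G; apply/setP => y; rewrite !inE.
  by case: eqP => [->|]; rewrite ?(negbTE hxS) ?andbF.
rewrite hGA /probD cardsU1 hxA add1n.
have hcD : #|D| = #|D :\ x|.+1 by rewrite (cardsD1 x D) hxD.
have hAD : (#|A| <= #|D :\ x|)%N by apply: subset_leq_card.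
rewrite hcD subSn // subSS !exprS.
set P := p ^+ _; set Q := (1 - p) ^+ _; ring.
Qed.


Lemma cardT2 n : #|[set: 'I_n * 'I_n]%SET| = (n * n)%N.
Proof. by rewrite cardsT card_prod card_ord. Qed.

Lemma reindex_sq (R : realType) (p : R) (a b : nat) (h : 'I_a * 'I_a -> 'I_b * 'I_b) (t : Z2) :
  injective h -> (forall x, sq_emb (h x) = shift t (sq_emb x)) ->
  \sum_(B : {set 'I_b * 'I_b} | B \subset h @: [set: _]%SET) probD p (h @: [set: _]%SET) B * lTS (sq_set B) = E_lTS p a.
Proof.
move=> hinj ht.
rewrite /E_lTS (reindex_onto (fun C : {set 'I_a * 'I_a} => h @: C) (fun B : {set 'I_b * 'I_b} => h @^-1: B)) /=; last first.
  move=> B hB; apply/setP => y; apply/imsetP/idP => [[x]|hy].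
    by rewrite inE => hx ->.
  have /imsetP [x _ hxy] := fintype.subsetP hB y hy.
  by exists x => //; rewrite inE -hxy.
apply: eq_big => C.
  rewrite imsetS ?finset.subsetT //=; apply/eqP/setP => x; by rewrite inE mem_imset.
move=> _; rewrite /probD /perc_prob !card_imset // cardT2; congr (_ * _).
have -> : sq_set (h @: C) = shift t @` sq_set C; last by rewrite lTS_shift.
apply/seteqP; split => z.
  by move=> [y /imsetP [x hx ->] ->]; exists (sq_emb x); [exists x | rewrite ht].
by move=> [w [x hx ->] <-]; exists (h x); [apply: imset_f | rewrite ht].
Qed.

Lemma restrict_E (R : realType) (p : R) (a b : nat) (h : 'I_a * 'I_a -> 'I_b * 'I_b) (t : Z2) :
  injective h -> (forall x, sq_emb (h x) = shift t (sq_emb x)) ->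
  \sum_(A : {set 'I_b * 'I_b}) perc_prob p A * lTS (sq_set (A :&: h @: [set: _]%SET)) = E_lTS p a.
Proof.
move=> hinj ht; rewrite -(reindex_sq p hinj ht).
set S := h @: [set: _]%SET.
have -> : \sum_(A : {set 'I_b * 'I_b}) perc_prob p A * lTS (sq_set (A :&: S)) =
   \sum_(A : {set 'I_b * 'I_b} | A \subset [set: _]%SET) probD p [set: _]%SET A * lTS (sq_set (A :&: S)).
  by apply: eq_big => A; rewrite ?finset.subsetT // => _; rewrite /probD cardT2.
rewrite (@marg _ p _ [set: _]%SET S (fun A => lTS (sq_set (A :&: S)))) ?finset.subsetT //; last first.
  by move=> A; rewrite -finset.setIA finset.setIid.
by apply: eq_bigr => B hB; rewrite (finset.setIidPl hB).
Qed.

Lemma blk_lt (K m i x : nat) : (x < m)%N -> (i < K)%N -> (x + i * m < K * m)%N.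
Proof. by move=> hx hi; nia. Qed.

Definition hb (K m : nat) (i l : 'I_K) (x : 'I_m * 'I_m) : 'I_(K * m) * 'I_(K * m) :=
  (Ordinal (blk_lt (ltn_ord x.1) (ltn_ord i)), Ordinal (blk_lt (ltn_ord x.2) (ltn_ord l))).

Lemma hb_inj K m i l : injective (@hb K m i l).
Proof.
move=> [x1 x2] [y1 y2] [h1 h2]; congr pair; apply: val_inj => /=; lia.
Qed.

Lemma hb_emb K m i l x :
  sq_emb (@hb K m i l x) = shift ((i * m)%N%:Z, (l * m)%N%:Z) (sq_emb x).
Proof. by rewrite /sq_emb /shift /= !PoszD. Qed.

Definition Sblk (K m i l : nat) : {set 'I_(K * m) * 'I_(K * m)} :=
  [set x : 'I_(K * m) * 'I_(K * m) | ((x.1 %/ m)%N == i) && ((x.2 %/ m)%N == l)].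

Lemma Sblk_hb K m (hm : (0 < m)%N) (i l : 'I_K) : Sblk K m i l = hb i l @: [set: _]%SET.
Proof.
apply/setP => y; rewrite inE; apply/andP/imsetP.
  move=> [h1 h2]; exists (Ordinal (ltn_pmod y.1 hm), Ordinal (ltn_pmod y.2 hm)).
    by rewrite inE.
  case: y h1 h2 => y1 y2 h1 h2; congr pair; apply: val_inj => /=;
    by rewrite addnC -?(eqP h1) -?(eqP h2) -divn_eq.
move=> [x _ ->] /=; rewrite !divnDr ?dvdn_mull // !mulnK // !divn_small //.
Qed.

Lemma E_block (R : realType) (p : R) K m (hm : (0 < m)%N) (i l : 'I_K) :
  \sum_(A : {set 'I_(K * m) * 'I_(K * m)}) perc_prob p A * lTS (sq_set (A :&: Sblk K m i l))
  = E_lTS p m.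
Proof. rewrite Sblk_hb //; apply: restrict_E (@hb_inj K m i l) (hb_emb i l). Qed.


Definition reg (m i l : nat) (z : Z2) : bool :=
  [&& (i * m)%N%:Z <= z.1, z.1 < (i * m + m)%N%:Z,
      (l * m)%N%:Z <= z.2 & z.2 < (l * m + m)%N%:Z].

Lemma sq_reg K m (hm : (0 < m)%N) i l A z :
  sq_set (A :&: Sblk K m i l) z -> reg m i l z.
Proof.
move=> [x]; rewrite !inE => /andP[_ /andP[/eqP h1 /eqP h2]] ->.
rewrite /reg /sq_emb /= !lez_nat !ltz_nat.
have e1 := divn_eq x.1 m; have e2 := divn_eq x.2 m.
have r1 := ltn_pmod x.1 hm; have r2 := ltn_pmod x.2 hm.
rewrite h1 in e1; rewrite h2 in e2.
apply/and4P; split; lia.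
Qed.

Lemma dist_row m i j a b : reg m i j a -> reg m i j.+1 b -> (dist a b <= 3 * m)%N.
Proof.
rewrite /reg /dist mulSn; case: a b => [a1 a2] [b1 b2] /=.
move=> /and4P[h1 h2 h3 h4] /and4P[h5 h6 h7 h8].
move: h1 h2 h3 h4 h5 h6 h7 h8; rewrite !PoszD; lia.
Qed.

Lemma dist_col m i K a b : reg m i K a -> reg m i.+1 0 b -> (dist a b <= (K + 3) * m)%N.
Proof.
rewrite /reg /dist mulSn; case: a b => [a1 a2] [b1 b2] /=.
move=> /and4P[h1 h2 h3 h4] /and4P[h5 h6 h7 h8].
move: h1 h2 h3 h4 h5 h6 h7 h8; rewrite !PoszD mul0n; nia.
Qed.

Lemma blk_path_ex (R : realType) K m (hm : (0 < m)%N) (A : {set 'I_(K * m) * 'I_(K * m)})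
  (il : nat * nat) : exists q : Z2 * seq Z2,
  [/\ path Z2adj q.1 q.2,
      lTS (R:=R) (sq_set (A :&: Sblk K m il.1 il.2)) = (size q.2)%:R,
      (forall v, sq_set (A :&: Sblk K m il.1 il.2) v -> v \in q.1 :: q.2),
      reg m il.1 il.2 q.1 & reg m il.1 il.2 (last q.1 q.2)].
Proof.
set V := sq_set _.
case: (pselect (exists v, V v)) => [hne|hne].
  have [s [hs hl hmin]] := lTS_min R (sq_path (A :&: Sblk K m il.1 il.2)).
  case: s hs hl hmin => [|x t] hs hl hmin.
    by case: hne => v hv; case: hs => _ /(_ v hv).
  exists (x, t); split => //=.
  - by case: hs.
  - by case: hs.
  - exact: sq_reg hm _ _ _ _ (min_head hne hs hmin).
  - exact: sq_reg hm _ _ _ _ (min_last hne hs hmin).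
exists (((il.1 * m)%N%:Z, (il.2 * m)%N%:Z), [::]); split => //=.
- apply/le_anti/andP; split; last exact: lTS_ge0 (sq_path _).
  have := @lTS_le R V [::]; apply; split => // v hv; exfalso; apply: hne; by exists v.
- by move=> v hv; exfalso; apply: hne; exists v.
- by rewrite /reg /= !lexx !ltz_nat; apply/and4P; split => //; lia.
- by rewrite /reg /= !lexx !ltz_nat; apply/and4P; split => //; lia.
Qed.

Lemma block_bound (R : realType) K m (hm : (0 < m)%N) (A : {set 'I_(K.+1 * m) * 'I_(K.+1 * m)}) :
  lTS (R:=R) (sq_set A) <=
  \sum_(i < K.+1) \sum_(l < K.+1) lTS (R:=R) (sq_set (A :&: Sblk K.+1 m i l))
  + (6 * K.+1 * K.+1 * m)%N%:R.
Proof.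
have [Q hQ] := choice (blk_path_ex R hm A).
have hrow : forall i : nat, exists u, [/\ path Z2adj (Q (i, 0%N)).1 u,
   last (Q (i, 0%N)).1 u = last (Q (i, K)).1 (Q (i, K)).2,
   (forall j v, (j <= K)%N -> v \in (Q (i, j)).1 :: (Q (i, j)).2 -> v \in (Q (i, 0%N)).1 :: u) &
   (size u <= \sum_(j < K.+1) size (Q (i, nat_of_ord j)).2 + K * (3 * m))%N].
  move=> i; apply: (chain_ex (fun j => Q (i, j)) (3 * m) K).
    by move=> j; case: (hQ (i, j)).
  move=> j _ /=; case: (hQ (i, j)) => _ _ _ _ h1; case: (hQ (i, j.+1)) => _ _ _ h2 _.
  exact: dist_row h1 h2.
have [U hU] := choice hrow.
have [u [hu1 hu2 hu3 hu4]] : exists u, [/\ path Z2adj (Q (0%N, 0%N)).1 u,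
   last (Q (0%N, 0%N)).1 u = last (Q (K, 0%N)).1 (U K),
   (forall i v, (i <= K)%N -> v \in (Q (i, 0%N)).1 :: U i -> v \in (Q (0%N, 0%N)).1 :: u) &
   (size u <= \sum_(i < K.+1) size (U i) + K * ((K + 3) * m))%N].
  apply: (chain_ex (fun i => ((Q (i, 0%N)).1, U i)) ((K + 3) * m) K).
    by move=> i; case: (hU i).
  move=> i _ /=; case: (hU i) => _ -> _ _.
  case: (hQ (i, K)) => _ _ _ _ h1; case: (hQ (i.+1, 0%N)) => _ _ _ h2 _.
  exact: dist_col h1 h2.
have hP : Pth (sq_set A) ((Q (0%N, 0%N)).1 :: u).
  split => // v [x hx ->].
  have hi : (x.1 %/ m <= K)%N by rewrite -ltnS ltn_divLR.
  have hl : (x.2 %/ m <= K)%N by rewrite -ltnS ltn_divLR.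
  apply: (hu3 (x.1 %/ m)%N) => //.
  case: (hU (x.1 %/ m)%N) => _ _ h _; apply: (h (x.2 %/ m)%N) => //.
  case: (hQ (x.1 %/ m, x.2 %/ m)%N) => _ _ h' _ _; apply: h'.
  by exists x => //; rewrite !inE hx !eqxx.
apply: le_trans (lTS_le R hP) _; rewrite /Z2path_length /=.
have hsz : (size u <= \sum_(i < K.+1) \sum_(l < K.+1) size (Q (nat_of_ord i, nat_of_ord l)).2
    + 6 * K.+1 * K.+1 * m)%N.
  apply: leq_trans hu4 _.
  have : (\sum_(i < K.+1) size (U i) <= \sum_(i < K.+1) (\sum_(l < K.+1) size (Q (nat_of_ord i, nat_of_ord l)).2 + K * (3 * m)))%N.
    by apply: leq_sum => i _; case: (hU i) => _ _ _ ->.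
  rewrite big_split /= sum_nat_const card_ord; nia.
have := hsz; rewrite -(ler_nat R) => /le_trans; apply.
rewrite natrD natr_sum lerD2r; apply: ler_sum => i _; rewrite natr_sum; apply: ler_sum => l _.
by case: (hQ (nat_of_ord i, nat_of_ord l)) => _ -> _ _ _.
Qed.


Lemma perc_ge0 (R : realType) (p : R) n (A : {set 'I_n * 'I_n}) :
  0 <= p -> p <= 1 -> 0 <= perc_prob p A.
Proof.
by move=> h0 h1; rewrite /perc_prob mulr_ge0 // exprn_ge0 // subr_ge0.
Qed.

Lemma sum_sub0 (R : realType) (T : finType) (F : {set T} -> R) :
  \sum_(A : {set T} | A \subset finset.set0) F A = F finset.set0.
Proof.
rewrite (big_pred1 finset.set0) // => A; by rewrite finset.subset0.
Qed.

Lemma perc_sum1 (R : realType) (p : R) n :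
  \sum_(A : {set 'I_n * 'I_n}) perc_prob p A = 1.
Proof.
have -> : \sum_(A : {set 'I_n * 'I_n}) perc_prob p A =
   \sum_(A : {set 'I_n * 'I_n} | A \subset [set: _]%SET) probD p [set: _]%SET A * 1.
  by apply: eq_big => A; rewrite ?finset.subsetT // => _; rewrite /probD cardT2 mulr1.
rewrite (@marg _ p _ [set: _]%SET finset.set0 (fun _ => 1)) ?sub0set //.
by rewrite sum_sub0 /probD cards0 subnn !expr0 !mulr1.
Qed.

Lemma perc_mem (R : realType) (p : R) n (x : 'I_n * 'I_n) :
  \sum_(A : {set 'I_n * 'I_n}) perc_prob p A * (x \in A)%:R = p.
Proof.
have -> : \sum_(A : {set 'I_n * 'I_n}) perc_prob p A * (x \in A)%:R =
   \sum_(A : {set 'I_n * 'I_n} | A \subset [set: _]%SET) probD p [set: _]%SET A * (x \in A)%:R.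
  by apply: eq_big => A; rewrite ?finset.subsetT // => _; rewrite /probD cardT2.
rewrite (@marg _ p _ [set: _]%SET [set x]%SET (fun A => (x \in A)%:R)) ?finset.subsetT //; last first.
  by move=> A; rewrite !inE eqxx andbT.
have -> : [set x]%SET = x |: finset.set0 by rewrite finset.setU0.
rewrite sum_split ?inE // sum_sub0 /probD !inE eqxx /= cards0 finset.setU0 cards1.
by rewrite mulr0 add0r subnn expr1 expr0 !mulr1.
Qed.

Lemma perc_card (R : realType) (p : R) n :
  \sum_(A : {set 'I_n * 'I_n}) perc_prob p A * #|A|%:R = p * (n * n)%:R.
Proof.
have hc : forall A : {set 'I_n * 'I_n}, #|A|%:R = \sum_(x : 'I_n * 'I_n) ((x \in A)%:R : R).
  move=> A; rewrite -sum1_card natr_sum big_mkcond /=; apply: eq_bigr => x _; by case: (x \in A).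
under eq_bigr do rewrite hc mulr_sumr.
rewrite exchange_big /=.
under eq_bigr do rewrite perc_mem.
by rewrite sumr_const card_prod card_ord mulr_natr.
Qed.

Lemma sq_emb_inj n : injective (@sq_emb n).
Proof.
move=> [x1 x2] [y1 y2]; rewrite /sq_emb /= => -[h1 h2].
by congr pair; apply: val_inj.
Qed.

Lemma lTS_card (R : realType) n (A : {set 'I_n * 'I_n}) :
  #|A|%:R - 1 <= lTS (R:=R) (sq_set A).
Proof.
have [s [[hs1 hs2] -> _]] := lTS_min R (sq_path A).
have hle : (#|A| <= size s)%N.
  rewrite cardE -(size_map (@sq_emb n)); apply: uniq_leq_size.
    by rewrite map_inj_uniq ?enum_uniq //; exact: sq_emb_inj.
  move=> v /mapP [x hx ->]; apply: hs2; exists x => //; by rewrite -mem_enum.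
rewrite lerBlDr /Z2path_length -[X in _ <= _ + X](mulr1n 1) -natrD ler_nat; lia.
Qed.

Lemma E_lower (R : realType) (p : R) n : 0 <= p -> p <= 1 ->
  p * (n * n)%:R - 1 <= E_lTS p n.
Proof.
move=> h0 h1; rewrite -perc_card -[X in _ - X](perc_sum1 p n) -sumrB /E_lTS.
apply: ler_sum => A _; rewrite -[X in _ - X]mulr1 -mulrBr.
by apply: ler_wpM2l; [exact: perc_ge0 | exact: lTS_card].
Qed.

Lemma E_mono (R : realType) (p : R) a b : 0 <= p -> p <= 1 -> (a <= b)%N ->
  E_lTS p a <= E_lTS p b.
Proof.
move=> h0 h1 hab.
pose hw := fun x : 'I_a * 'I_a => (widen_ord hab x.1, widen_ord hab x.2).
have hinj : injective hw.
  by move=> [x1 x2] [y1 y2] [e1 e2]; congr pair; apply: val_inj.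
have ht : forall x, sq_emb (hw x) = shift (0, 0) (sq_emb x).
  by move=> x; rewrite /shift /sq_emb /= !addr0.
rewrite -(restrict_E p hinj ht) /E_lTS; apply: ler_sum => A _.
apply: ler_wpM2l; first exact: perc_ge0.
apply: lTS_mono; last exact: sq_path.
by move=> z [x]; rewrite inE => /andP[hx _] ->; exists x.
Qed.

Lemma E_block_le (R : realType) (p : R) K m : 0 <= p -> p <= 1 -> (0 < m)%N ->
  E_lTS p (K.+1 * m) <= (K.+1 * K.+1)%:R * E_lTS p m + (6 * K.+1 * K.+1 * m)%N%:R.
Proof.
move=> h0 h1 hm.
apply: le_trans (_ : \sum_(A : {set 'I_(K.+1 * m) * 'I_(K.+1 * m)}) perc_prob p A *
   (\sum_(i < K.+1) \sum_(l < K.+1) lTS (sq_set (A :&: Sblk K.+1 m i l))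
      + (6 * K.+1 * K.+1 * m)%N%:R) <= _).
  apply: ler_sum => A _; apply: ler_wpM2l; first exact: perc_ge0.
  exact: block_bound.
under eq_bigr do rewrite mulrDr.
rewrite big_split /= -mulr_suml perc_sum1 mul1r lerD2r.
under eq_bigr do rewrite mulr_sumr.
rewrite exchange_big /=.
under eq_bigr do (under eq_bigr do rewrite mulr_sumr; rewrite exchange_big /=).
under eq_bigr do (under eq_bigr do rewrite E_block //).
by rewrite !sumr_const !card_ord -mulrnA mulr_natl.
Qed.


Lemma E_ge0 (R : realType) (p : R) n : 0 <= p -> p <= 1 -> 0 <= E_lTS p n.
Proof.
move=> h0 h1; apply: sumr_ge0 => A _; apply: mulr_ge0; first exact: perc_ge0.
exact: lTS_ge0 (sq_path A).
Qed.

Lemma a_lower (R : realType) (p : R) n : 0 <= p -> p <= 1 -> (0 < n)%N ->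
  p - 1 / (n%:R ^+ 2) <= E_lTS p n / (n%:R ^+ 2).
Proof.
move=> h0 h1 hn.
have hn2 : 0 < (n%:R : R) ^+ 2 by rewrite exprn_gt0 // ltr0n.
rewrite ler_pdivlMr // mulrBl div1r mulVf ?gt_eqF //.
by have := E_lower n h0 h1; rewrite natrM -expr2.
Qed.

Lemma a_upper (R : realType) (p : R) m n : 0 <= p -> p <= 1 -> (0 < m)%N -> (m <= n)%N ->
  E_lTS p n / (n%:R ^+ 2) <=
  (1 + 3 / (n %/ m)%N%:R) * (E_lTS p m / (m%:R ^+ 2) + 6 / m%:R).
Proof.
move=> h0 h1 hm hmn.
set k := (n %/ m)%N.
have hk : (0 < k)%N by rewrite divn_gt0.
have hkm : (k * m <= n)%N by rewrite leq_divM.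
have hnk : (n <= k.+1 * m)%N.
  have e := divn_eq n m; have r := ltn_pmod n hm; rewrite -/k in e; move: e r; move: (n %% m)%N => r0; nia.
have hX : E_lTS p n <= (k.+1 * k.+1)%:R * E_lTS p m + (6 * k.+1 * k.+1 * m)%N%:R.
  apply: le_trans (E_block_le k h0 h1 hm); exact: E_mono.
have hfm := E_ge0 m h0 h1.
have hfn := E_ge0 n h0 h1.
have hk1e : (k.+1%:R : R) = k%:R + 1 by rewrite natr1.
move: hX; rewrite !natrM hk1e.
have : (k * m)%:R <= n%:R :> R by rewrite ler_nat.
have : (1 : R) <= k%:R by rewrite ler1n.
have : (1 : R) <= m%:R by rewrite ler1n.
rewrite natrM.
set X := E_lTS p n; set fm := E_lTS p m; set kk := (k%:R : R); set mm := (m%:R : R); set nn := (n%:R : R).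
move=> hm1 hk1 hkmn hX.
have hmm : 0 < mm by lra.
have hkk : 0 < kk by lra.
have hnn : 0 < nn by nra.
rewrite ler_pdivrMr ?exprn_gt0 //.
have -> : (1 + 3 / kk) * (fm / mm ^+ 2 + 6 / mm) = (kk + 3) * (fm + 6 * mm) / (kk * mm ^+ 2).
  by field; rewrite ?mulf_neq0 ?expf_neq0 ?gt_eqF.
have hkm0 : 0 <= kk * mm by nra.
have hsq : (kk * mm) ^+ 2 <= nn ^+ 2 by rewrite !expr2; apply: ler_pM.
have hfm0 : 0 <= fm by exact: hfm.
have hF : 0 <= fm + 6 * mm by lra.
apply: le_trans hX _.
apply: le_trans (_ : (kk + 3) * (fm + 6 * mm) / (kk * mm ^+ 2) * (kk * mm) ^+ 2 <= _).
  have -> : (kk + 3) * (fm + 6 * mm) / (kk * mm ^+ 2) * (kk * mm) ^+ 2 = (kk + 3) * kk * (fm + 6 * mm).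
    by field; rewrite ?mulf_neq0 ?expf_neq0 ?gt_eqF.
  nra.
apply: ler_wpM2l => //; apply: divr_ge0; nra.
Qed.


Unset Implicit Arguments. Set Strict Implicit.

Theorem lemma2p3 (R : realType) (p : R) (hp0 : 0 < p) (hp1 : p < 1) :
  exists alpha : R, 0 < alpha /\
    (fun n : nat => E_lTS p n / (n%:R ^+ 2)) @ \oo --> alpha.
Proof.
have h0 : 0 <= p by apply: ltW.
have h1 : p <= 1 by apply: ltW.
pose a := fun n : nat => E_lTS p n / (n%:R ^+ 2).
pose g := fun m : nat => a m.+1 + 6 / (m.+1)%:R.
have hg : forall m, p <= g m.
  move=> m; have := a_lower (n := m.+1) h0 h1 (ltn0Sn _); rewrite /g /a.
  have hm : (1:R) <= m.+1%:R by rewrite ler1n.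
  set x := E_lTS _ _ / _ ; set mm := (m.+1%:R : R).
  suff : 1 / mm ^+ 2 <= 6 / mm by set y := 1 / mm ^+ 2; set z := 6 / mm; lra.
  have -> : 6 / mm = (6 * mm) / mm ^+ 2 by field; lra.
  rewrite ler_pM2r ?invr_gt0 ?exprn_gt0 //; lra.
pose G := range g.
have hG0 : G !=set0 by exists (g 0%N), 0%N.
have hGlb : lbound G p by move=> _ [m _ <-].
have hinf : has_inf G by split => //; exists p.
set alpha := inf G.
have halpha : p <= alpha by apply: lb_le_inf.
have hag : forall m, alpha <= g m.
  by move=> m; apply: (ge_inf (E := G)); [exists p | exists m].
exists alpha; split; first lra.
apply/cvgrPdist_le => e e0.
have e20 : 0 < e / 2 by apply: divr_gt0.
have [_ [m _ <-] hm] := inf_adherent e20 hinf.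
have hM0 : 0 <= g m by apply: le_trans h0 (hg m).
have hK0 := @archi_boundP R (6 * g m / e) (divr_ge0 (mulr_ge0 (ler0n _ 6) hM0) (ltW e0)).
set K0 := Num.Def.archi_bound _ in hK0.
have hN0 := @archi_boundP R (6 / e) (divr_ge0 (ler0n _ 6) (ltW e0)).
set N0 := Num.Def.archi_bound _ in hN0.
exists (maxn (K0 * m.+1) (maxn m.+1 N0)) => // n /= hn.
move: hn; rewrite !geq_max => /and3P[hKn hmn hNn].
case: n hKn hmn hNn => [//|n'] hKn hmn hNn.
have hlow : alpha - 6 / n'.+1%:R <= a n'.+1.
  have := hag n'; rewrite /g; set z := 6 / _; set w := a _; lra.
have h6 : 6 / n'.+1%:R <= e.
  rewrite ler_pdivrMr ?ltr0n //.
  have : N0%:R <= n'.+1%:R :> R by rewrite ler_nat.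
  move: hN0; rewrite ltr_pdivrMr //; nra.
set k := (n'.+1 %/ m.+1)%N.
have hkK : (K0 <= k)%N by rewrite leq_divRL.
have hup := a_upper (m := m.+1) (n := n'.+1) h0 h1 (ltn0Sn _) hmn.
rewrite -/k -/(g m) in hup.
have hk0 : (0 < k)%N by rewrite divn_gt0.
have hkk : 0 < k%:R :> R by rewrite ltr0n.
have h3 : 3 * g m / k%:R <= e / 2.
  rewrite ler_pdivrMr //.
  have : K0%:R <= k%:R :> R by rewrite ler_nat.
  move: hK0; rewrite ltr_pdivrMr //; nra.
have e' : (1 + 3 / k%:R) * g m = g m + 3 * g m / k%:R by field; rewrite gt_eqF.
rewrite e' in hup.
have hup' : a n'.+1 <= g m + 3 * g m / k%:R by exact: hup.
have hm' : g m < alpha + e / 2 by exact: hm.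
rewrite /= -/(a n'.+1) ler_norml; apply/andP; move: hlow hup' h6 h3 hm'; set A1 := a _; set A2 := 6 / _; set A3 := 3 * _ / _; set A4 := g m; move=> *; split; lra.
Qed.
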